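(* In the DGL-test-based classification setting described in the context, with $M\ge2$, $n,N\ge1$, $\alpha=N/n$ and $D=\min_{i\neq j}V(P_i,P_j)$, the classification error probability satisfies, for every prior $(\pi_1,\dots,\pi_M)$, $$\Pr[e_{\mathrm{CL}}]\le 2M\exp\!\Big(-n\Big(\frac{2\alpha D^2}{(3|\mathcal X|+2\sqrt\alpha)^2}-\max\Big\{\frac{2\ln(M-1)}{n},\frac{\ln|\mathcal X|}{n}\Big\}\Big)\Big).$$
   Context: Setting: $\mathcal X$ is a finite alphabet and $P_1,\dots,P_M$ are (unknown) distributions on $\mathcal X$. For distributions $P,Q$ on $\mathcal X$, $V(P,Q)=\max_{F\subseteq\mathcal X}|P(F)-Q(F)|=\frac12\sum_{a}|P(a)-Q(a)|$. Training sequences $\vec t_i^{\,N}=(t_{i1},\dots,t_{iN})$, $i=1,\dots,M$, are mutually independent, with $\vec t_i^{\,N}$ i.i.d. from $P_i$; $T_i(a)=\frac1N\#\{k:t_{ik}=a\}$ is its empirical distribution, and $T_i(A)=\sum_{a\in A}T_i(a)$. Under hypothesis $\mathcal H_i$, the test sequence $\vec x^{\,n}=(x_1,\dots,x_n)$ is i.i.d. from $P_i$ and independent of the training sequences. Classifier (DGL test with nominal distributions $T_i$): let $\mathcal A=\{A_{k,l}:1\le k<l\le M\}$ with $A_{k,l}=\{a\in\mathcal X: T_k(a)\ge T_l(a)\}$, let $\mu_n(A)=\frac1n\#\{m: x_m\in A\}$, define the score $s_j=\max_{A\in\mathcal A}|T_j(A)-\mu_n(A)|$, and output any index $\hat\imath$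 minimizing $s_j$ over $j$ (ties broken arbitrarily). Given a prior $\pi_i>0$, $\sum_i\pi_i=1$, the classification error probability is $\Pr[e_{\mathrm{CL}}]=\sum_{i=1}^M\pi_i\Pr[\hat\imath\neq i\mid\mathcal H_i]$, the probability taken over both the test and training sequences. *)

(* Defs.v *)
From HB Require Import structures.
From mathcomp Require Import all_boot all_order all_algebra.
From mathcomp Require Import all_classical all_reals all_analysis.
Set Implicit Arguments. Unset Strict Implicit. Unset Printing Implicit Defensive.
Import Order.TTheory GRing.Theory Num.Theory.
Local Open Scope ring_scope.

Section DGL.
Variables (R : realType) (X : finType).

Definition is_distr (P : X -> R) : Prop :=
  (forall a, 0 <= P a) /\ \sum_(a : X) P a = 1.

Definition tvdist (P Q : X -> R) : R := 2^-1 * \sum_(a : X) `|P a - Q a|.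

(* D = min_{i <> j} V(P_i,P_j); the neutral element 1 is harmless since
   V <= 1 for distributions and M >= 2 makes the range nonempty. *)
Definition Dmin (M : nat) (P : 'I_M -> X -> R) : R :=
  \big[Num.min/1]_(i < M) \big[Num.min/1]_(j < M | i != j) tvdist (P i) (P j).

Definition empirical (N : nat) (t : {ffun 'I_N -> X}) (a : X) : R :=
  #|[set k | t k == a]|%:R / N%:R.

Definition emp_set (N : nat) (t : {ffun 'I_N -> X}) (A : {set X}) : R :=
  \sum_(a in A) empirical t a.

Definition mu_test (n : nat) (x : {ffun 'I_n -> X}) (A : {set X}) : R :=
  #|[set m | x m \in A]|%:R / n%:R.

Definition scheffe (M N : nat) (t : {ffun 'I_M -> {ffun 'I_N -> X}}) (k l : 'I_M)
  : {set X} := [set a | empirical (t l) a <= empirical (t k) a].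

(* score s_j = max_{k<l} |T_j(A_{k,l}) - mu_n(A_{k,l})| (all terms are >= 0,
   so the neutral element 0 does not change the maximum) *)
Definition score (M N n : nat) (t : {ffun 'I_M -> {ffun 'I_N -> X}})
  (x : {ffun 'I_n -> X}) (j : 'I_M) : R :=
  \big[Num.max/0]_(k < M) \big[Num.max/0]_(l < M | (k < l)%N)
     `|emp_set (t j) (scheffe t k l) - mu_test x (scheffe t k l)|.

(* a decision rule is a DGL classifier if it always outputs a minimizer of the score
   (arbitrary tie-breaking = arbitrary such rule) *)
Definition DGL_rule (M N n : nat)
  (g : {ffun 'I_M -> {ffun 'I_N -> X}} -> {ffun 'I_n -> X} -> 'I_M) : Prop :=
  forall t x j, score t x (g t x) <= score t x j.

Definition Ptrain (M N : nat) (P : 'I_M -> X -> R)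
  (t : {ffun 'I_M -> {ffun 'I_N -> X}}) : R :=
  \prod_(i < M) \prod_(k < N) P i (t i k).

Definition Ptest (n : nat) (Q : X -> R) (x : {ffun 'I_n -> X}) : R :=
  \prod_(m < n) Q (x m).

Definition err_CL (M N n : nat) (P : 'I_M -> X -> R) (pi : 'I_M -> R)
  (g : {ffun 'I_M -> {ffun 'I_N -> X}} -> {ffun 'I_n -> X} -> 'I_M) : R :=
  \sum_(i < M) pi i *
    \sum_(t : {ffun 'I_M -> {ffun 'I_N -> X}}) \sum_(x : {ffun 'I_n -> X})
      (if g t x != i then Ptrain P t * Ptest (P i) x else 0).

End DGL.

(* Main.v *)
Require Import Defs.
From HB Require Import structures.
From mathcomp Require Import all_boot all_order all_algebra.
From mathcomp Require Import all_classical all_reals all_analysis.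
From mathcomp Require Import ring lra.
Import Order.TTheory GRing.Theory Num.Theory.
Local Open Scope ring_scope.
Section Calc.
Variable R : realType.
Implicit Types (f g : R -> R) (x a b : R).
Lemma dD f g x a b : is_derive x (1:R) f a -> is_derive x (1:R) g b ->
  is_derive x (1:R) (fun y => f y + g y) (a + b).
Proof. move=> ha hb; exact: (is_deriveD ha hb). Qed.
Lemma dB f g x a b : is_derive x (1:R) f a -> is_derive x (1:R) g b ->
  is_derive x (1:R) (fun y => f y - g y) (a - b).
Proof. move=> ha hb; exact: (is_deriveB ha hb). Qed.
Lemma dN f x a : is_derive x (1:R) f a ->
  is_derive x (1:R) (fun y => - f y) (- a).
Proof. move=> ha; exact: (is_deriveN ha). Qed.
Lemma dM f g x a b : is_derive x (1:R) f a -> is_derive x (1:R) g b ->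
  is_derive x (1:R) (fun y => f y * g y) (f x * b + g x * a).
Proof. move=> ha hb; exact: (is_deriveM ha hb). Qed.
Lemma dV f x a : f x != 0 -> is_derive x (1:R) f a ->
  is_derive x (1:R) (fun y => (f y)^-1) (- a / (f x) ^+ 2).
Proof.
move=> h ha; have := is_deriveV h ha; move/is_derive_eq; apply.
change (- (f x ^- 2) * a = - a / f x ^+ 2). by rewrite !mulNr mulrC.
Qed.
Lemma dexp f x a : is_derive x (1:R) f a ->
  is_derive x (1:R) (fun y => expR (f y)) (expR (f x) * a).
Proof. move=> ha; exact: (@is_derive1_comp R expR f x _ a (is_derive_expR (f x)) ha). Qed.
Lemma dcst (c x : R) : is_derive x (1:R) (fun _ => c) 0.
Proof. exact: is_derive_cst. Qed.
Lemma did (x : R) : is_derive x (1:R) (fun y => y) 1.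
Proof. exact: is_derive_id. Qed.
Lemma mono_from_deriv (f df : R -> R) :
  (forall x : R, is_derive x (1:R) f (df x)) -> (forall x, 0 <= x -> 0 <= df x) ->
  forall x, 0 <= x -> f 0 <= f x.
Proof.
move=> Hd Hpos x x0.
apply: (@ger0_derive1_ndecr R f 0 x) => //.
- move=> y; rewrite in_itv /= => /andP[y0 _].
  by rewrite derive1E derive_val; apply: Hpos; apply: ltW.
- apply: (@derivable_within_continuous R R f `[0, x]) => y _; by have [] := Hd y.
Qed.

Ltac dtac := repeat first [ eapply dB | eapply dD | eapply dM | eapply dexp | eapply did | eapply dcst ].

Section Hoeff.
Variable p : R.

Lemma W_gt0 s (p0 : 0 <= p) (p1 : p <= 1) : 0 < 1 - p + p * expR s.
Proof.
have h := expR_gt0 s.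
have [->|pn0] := eqVneq p 0; first by rewrite mul0r addr0 subr0.
have pp : 0 < p by rewrite lt_neqAle eq_sym pn0 p0.
have : 0 < p * expR s by apply: mulr_gt0.
move=> ?; lra.
Qed.

Lemma k_ge0 s (p0 : 0 <= p) (p1 : p <= 1) : 0 <= s -> 0 <= s * 4^-1 + p - p * expR s * (1 - p + p * expR s)^-1.
Proof.
move=> s0.
have Hd : forall x : R, is_derive x (1:R) (fun y => y * 4^-1 + p - p * expR y * (1 - p + p * expR y)^-1)
  (4^-1 - p * expR x * (1 - p) / (1 - p + p * expR x) ^+ 2).
  move=> x. eapply is_derive_eq.
    eapply dB. eapply dD. eapply dM. apply did. apply dcst.
    apply dcst.
    eapply dM. eapply dM. apply dcst. eapply dexp. apply did.
    apply: dV. by rewrite gt_eqF // W_gt0.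
  rewrite /=.
  have := W_gt0 x p0 p1.
  set E := expR x => hW.
  change (p *: E) with (p * E).
  field. by rewrite gt_eqF.
have Hp : forall x : R, 0 <= x -> 0 <= 4^-1 - p * expR x * (1 - p) / (1 - p + p * expR x) ^+ 2.
  move=> x x0.
  have hW := W_gt0 x p0 p1.
  have e0 := expR_gt0 x.
  rewrite subr_ge0 ler_pdivrMr ?exprn_gt0 //.
  have := sqr_ge0 (1 - p - p * expR x).
  move=> hsq. nra.
have := mono_from_deriv _ _ Hd Hp _ s0.
rewrite expR0 mul0r add0r mulr1 subrK invr1 mulr1 subrr //.
Qed.
Lemma hoeff_mgf s (p0 : 0 <= p) (p1 : p <= 1) : 0 <= s ->
  (1 - p + p * expR s) * expR (- (s * p)) <= expR (s * s / 8).
Proof.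
move=> s0.
have Hd : forall x : R, is_derive x (1:R)
  (fun y => - ((1 - p + p * expR y) * expR (- (y * p + y * y * 8^-1))))
  (expR (- (x * p + x * x * 8^-1)) * (1 - p + p * expR x) *
     (x * 4^-1 + p - p * expR x * (1 - p + p * expR x)^-1)).
  move=> x. eapply is_derive_eq.
    eapply dN. eapply dM. eapply dD. apply dcst. eapply dM. apply dcst.
    eapply dexp. apply did. eapply dexp. eapply dN. eapply dD.
    eapply dM. apply did. apply dcst. eapply dM. eapply dM. apply did. apply did. apply dcst.
  rewrite /=.
  have := W_gt0 x p0 p1.
  set E := expR x => hW.
  field. by rewrite gt_eqF.
have Hp : forall x : R, 0 <= x -> 0 <= expR (- (x * p + x * x * 8^-1)) * (1 - p + p * expR x) *
     (x * 4^-1 + p - p * expR x * (1 - p + p * expR x)^-1).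
  move=> x x0.
  apply: mulr_ge0; first apply: mulr_ge0.
  - exact: expR_ge0.
  - exact: ltW (W_gt0 x p0 p1).
  - exact: k_ge0.
have := mono_from_deriv _ _ Hd Hp _ s0.
rewrite /= expR0 !mul0r addr0 oppr0 expR0 mulr1 subrK mulr1 lerN2 opprD expRD mulrA => H.
have -> : (1 - p + p * expR s) * expR (- (s * p)) =
  ((1 - p + p * expR s) * expR (- (s * p)) * expR (- (s * s / 8))) * expR (s * s / 8).
  by rewrite -mulrA -expRD addNr expR0 mulr1.
rewrite -[X in _ <= X]mul1r; apply: ler_wpM2r; [exact: expR_ge0| exact: H].
Qed.
End Hoeff.

Lemma mgf_eq (X : finType) (Q : X -> R) (f : pred X) (s : R) :
  \sum_a Q a = 1 ->
  \sum_a Q a * expR (s * ((f a)%:R - \sum_b Q b * (f b)%:R)) =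
  (1 - \sum_b Q b * (f b)%:R + (\sum_b Q b * (f b)%:R) * expR s) *
    expR (- (s * \sum_b Q b * (f b)%:R)).
Proof.
move=> hQ; set q := \sum_b Q b * (f b)%:R.
transitivity (\sum_a (expR (- (s * q)) * (Q a + Q a * (f a)%:R * (expR s - 1)))).
  apply: eq_bigr => a _; case: (f a) => /=.
  - rewrite (_ : s * _ = s + - (s * q)); last by rewrite /= mulrBr mulr1.
    rewrite expRD; ring.
  - by rewrite /= sub0r mulrN mulr0 mul0r addr0 mulrC.
rewrite -mulr_sumr big_split /= hQ -mulr_suml -/q mulrC; ring.
Qed.

Lemma hoeff_tail (X : finType) (Q : X -> R) (f : pred X) (n : nat) (e : R) :
  (forall u : X, 0 <= Q u) -> \sum_a Q a = 1 -> (0 < n)%N -> 0 <= e ->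
  \sum_(x : {ffun 'I_n -> X}) (if e <= (\sum_(m < n) (f (x m))%:R) / n%:R - \sum_a Q a * (f a)%:R
      then \prod_(m < n) Q (x m) else 0) <= expR (- (2 * n%:R * (e * e))).
Proof.
move=> Q0 hQ n0 e0.
set q := \sum_a Q a * (f a)%:R.
have q0 : 0 <= q by apply: sumr_ge0 => a _; apply: mulr_ge0 => //; case: (f a).
have q1 : q <= 1.
  rewrite -hQ; apply: ler_sum => a _; case: (f a); rewrite ?mulr1 ?mulr0 //.
set s := 4 * e.
have s0 : 0 <= s by rewrite /s; apply: mulr_ge0.
have nR : 0 < n%:R :> R by rewrite ltr0n.
pose E (a : X) := expR (s * ((f a)%:R - q)).
apply: (@le_trans _ _ (\sum_(x : {ffun 'I_n -> X}) (\prod_(m < n) (Q (x m) * E (x m))) * expR (- (s * (n%:R * e))))).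
  apply: ler_sum => x _.
  have PQ0 : 0 <= \prod_(m < n) Q (x m) by apply: prodr_ge0.
  have -> : \prod_(m < n) (Q (x m) * E (x m)) = \prod_(m < n) Q (x m) * expR (s * ((\sum_(m < n) (f (x m))%:R) - n%:R * q)).
    rewrite big_split /=; congr (_ * _).
    rewrite /E -expR_sum; congr expR.
    rewrite -mulr_sumr sumrB; congr (_ * (_ - _)).
    by rewrite sumr_const card_ord mulr_natl.
  rewrite -mulrA -expRD.
  case: ifP => H.
    rewrite -[X in X <= _]mulr1; apply: ler_wpM2l => //.
    set c := \sum_(m < n) (f (x m))%:R in H *.
    have hc : c / n%:R * n%:R = c by rewrite divfK // gt_eqF.
    have hx : 0 <= s * (c - n%:R * q) + - (s * (n%:R * e)).
      have hy : 0 <= c - n%:R * q - n%:R * e by move: H => /= H; nra.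
      have := mulr_ge0 s0 hy; lra.
    apply: le_trans (expR_ge1Dx _); lra.
  by apply: mulr_ge0 => //; apply: expR_ge0.
rewrite -mulr_suml -(bigA_distr_bigA (fun (m : 'I_n) (a : X) => Q a * E a)) /=.
rewrite prodr_const card_ord /E mgf_eq // -/q.
have hb : 0 <= (1 - q + q * expR s) * expR (- (s * q)).
  apply: mulr_ge0; last exact: expR_ge0. have := expR_ge0 s. nra.
apply: (@le_trans _ _ (expR (s * s / 8) ^+ n * expR (- (s * (n%:R * e))))).
  apply: ler_wpM2r; first exact: expR_ge0.
  apply: lerXn2r => //; rewrite ?nnegrE // ?expR_ge0 //.
  exact: hoeff_mgf.
rewrite -expRM_natl -expRD ler_expR /s. nra.
Qed.

End Calc.

Set Implicit Arguments. Unset Strict Implicit.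

Section TV.
Variables (R : realType) (X : finType).
Implicit Types (p q r : X -> R) (A : {set X}).

Lemma tv_set p q A : \sum_a p a = 1 -> \sum_a q a = 1 ->
  `| \sum_(a in A) p a - \sum_(a in A) q a | <= tvdist p q.
Proof.
move=> hp hq; rewrite /tvdist -sumrB.
have : \sum_a (p a - q a) = 0 by rewrite sumrB hp hq subrr.
rewrite (bigID (mem A)) /= => tot.
have h1 : `|\sum_(a in A) (p a - q a)| <= \sum_(a in A) `|p a - q a| by apply: ler_norm_sum.
have h2 : `|\sum_(a | a \notin A) (p a - q a)| <= \sum_(a | a \notin A) `|p a - q a| by apply: ler_norm_sum.
have e2 : \sum_(a | a \notin A) (p a - q a) = - \sum_(a in A) (p a - q a) by lra.
rewrite e2 normrN in h2.
rewrite [X in _ <= _ * X](bigID (mem A)) /=.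
lra.
Qed.

Lemma tv_scheffe p q : \sum_a p a = 1 -> \sum_a q a = 1 ->
  \sum_(a in [set a | q a <= p a]) p a - \sum_(a in [set a | q a <= p a]) q a = tvdist p q.
Proof.
move=> hp hq; rewrite /tvdist -sumrB.
set A := [set a | q a <= p a].
have : \sum_a (p a - q a) = 0 by rewrite sumrB hp hq subrr.
rewrite (bigID (mem A)) /= => tot.
have e1 : \sum_(a in A) (p a - q a) = \sum_(a in A) `|p a - q a|.
  by apply: eq_bigr => u; rewrite inE => h; rewrite ger0_norm // subr_ge0.
have e2 : \sum_(a | a \notin A) (p a - q a) = - \sum_(a | a \notin A) `|p a - q a|.
  rewrite -sumrN; apply: eq_bigr => u; rewrite inE -ltNge => h.
  by rewrite ltr0_norm ?opprK // subr_lt0.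
rewrite [X in _ = _ * X](bigID (mem A)) /=.
lra.
Qed.

Lemma tv_sym p q : tvdist p q = tvdist q p.
Proof. by rewrite /tvdist; congr (_ * _); apply: eq_bigr => a _; rewrite distrC. Qed.

Lemma tv_tri p q r : tvdist p r <= tvdist p q + tvdist q r.
Proof.
rewrite /tvdist -mulrDr ler_wpM2l // -big_split /=; apply: ler_sum => a _.
exact: ler_distD.
Qed.

Lemma tv_letters p q d : (forall a, `|p a - q a| <= d) -> tvdist p q <= 2^-1 * (#|X|%:R * d).
Proof.
move=> h; rewrite /tvdist ler_wpM2l //.
apply: le_trans (_ : \sum_(a : X) d <= _); first by apply: ler_sum.
by rewrite sumr_const mulr_natl.
Qed.
End TV.

Section Emp.
Variables (R : realType) (X : finType).

Lemma card_sumR (I : finType) (Pr : pred I) :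
  (#|[set k | Pr k]|%:R : R) = \sum_k (Pr k)%:R.
Proof.
rewrite -sum1dep_card natr_sum big_mkcond /=; apply: eq_bigr => k _.
by case: (Pr k).
Qed.

Lemma emp_ge0 N (t : {ffun 'I_N -> X}) a : 0 <= empirical R t a.
Proof. by rewrite /empirical divr_ge0. Qed.

Lemma emp_sum1 N (t : {ffun 'I_N -> X}) : (0 < N)%N -> \sum_a empirical R t a = 1.
Proof.
move=> N0; rewrite /empirical -mulr_suml.
under eq_bigr => a _ do rewrite card_sumR.
rewrite exchange_big /=.
rewrite (eq_bigr (fun _ => 1)); last first.
  move=> k _; rewrite (bigD1 (t k)) //= eqxx big1 ?addr0 //.
  by move=> b; rewrite eq_sym => /negbTE ->.
by rewrite sumr_const card_ord divff // pnatr_eq0 -lt0n.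
Qed.
End Emp.

Section Score.
Variables (R : realType) (X : finType) (M N n : nat).
Variable P : 'I_M -> X -> R.
Variables (t : {ffun 'I_M -> {ffun 'I_N -> X}}) (x : {ffun 'I_n -> X}).
Hypothesis hP : forall i, is_distr (P i).
Hypothesis N0 : (0 < N)%N.

Lemma tv_ge0 (p q : X -> R) : 0 <= tvdist p q.
Proof. by rewrite /tvdist mulr_ge0 // sumr_ge0. Qed.

Lemma score_upper i d2 : 0 <= d2 ->
  (forall k l : 'I_M, (k < l)%N ->
     `|mu_test R x (scheffe R t k l) - \sum_(a in scheffe R t k l) P i a| <= d2) ->
  score R t x i <= tvdist (empirical R (t i)) (P i) + d2.
Proof.
move=> d20 H; rewrite /score.
have V0 := tv_ge0 (empirical R (t i)) (P i).
apply: bigmax_le => [|k _]; first lra.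
apply: bigmax_le => [|l kl]; first lra.
have h1 := tv_set (scheffe R t k l) (emp_sum1 R (t i) N0) (proj2 (hP i)).
have h2 := H k l kl.
rewrite /emp_set.
set a1 := \sum_(a in _) empirical R (t i) a in h1 *.
set a2 := \sum_(a in _) P i a in h1 h2 *.
set a3 := mu_test R x _ in h2 *.
have := ler_distD a2 a1 a3.
rewrite distrC in h2; lra.
Qed.

Lemma score_lower i j : i != j ->
  `|emp_set R (t j) (scheffe R t (if (i < j)%N then i else j) (if (i < j)%N then j else i))
     - mu_test R x (scheffe R t (if (i < j)%N then i else j) (if (i < j)%N then j else i))|
  <= score R t x j.
Proof.
move=> ij; rewrite /score.
apply: (bigmax_sup (if (i < j)%N then i else j)) => //.
apply: (bigmax_sup (if (i < j)%N then j else i)) => //.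
case: (ltngtP i j) => // h; move: ij; by rewrite -(inj_eq val_inj) /= h eqxx.
Qed.



Lemma scheffe_tv i j : i != j ->
  `|emp_set R (t i) (scheffe R t (if (i < j)%N then i else j) (if (i < j)%N then j else i))
    - emp_set R (t j) (scheffe R t (if (i < j)%N then i else j) (if (i < j)%N then j else i))|
  = tvdist (empirical R (t i)) (empirical R (t j)).
Proof.
move=> ij; rewrite /emp_set /scheffe.
case: ifP => _.
  by rewrite tv_scheffe ?emp_sum1 // ger0_norm // tv_ge0.
by rewrite distrC tv_scheffe ?emp_sum1 // ger0_norm ?tv_ge0 // tv_sym.
Qed.


Lemma pair_lt (i j : 'I_M) : i != j ->
  ((if (i < j)%N then i else j) < (if (i < j)%N then j else i))%N.
Proof.
move=> ij; case: (ltngtP i j) => // h; move: ij; by rewrite -(inj_eq val_inj) /= h eqxx.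
Qed.

Lemma good_correct (g : {ffun 'I_M -> {ffun 'I_N -> X}} -> {ffun 'I_n -> X} -> 'I_M)
  (i : 'I_M) (D d1 d2 : R) :
  DGL_rule R g -> 0 <= d1 -> 0 <= d2 ->
  (forall j, j != i -> D <= tvdist (P i) (P j)) ->
  #|X|%:R * d1 * 2 + 2 * d2 <= D ->
  (forall k a, `|empirical R (t k) a - P k a| <= d1) ->
  (forall k l : 'I_M, (k < l)%N ->
     `|mu_test R x (scheffe R t k l) - \sum_(a in scheffe R t k l) P i a| < d2) ->
  g t x = i.
Proof.
move=> hg d10 d20 hD hd1 hl ht.
apply/eqP; apply/negPn/negP => ji.
have ij : i != g t x by rewrite eq_sym.
set j := g t x in ji ij *.
have sji : score R t x j <= score R t x i by exact: hg.
have si := score_upper d20 (fun k l kl => ltW (ht k l kl)).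
have sj := score_lower ij.
have tvA := scheffe_tv ij.
set A := scheffe R t _ _ in sj tvA.
have hA : `|mu_test R x A - \sum_(a in A) P i a| < d2 by apply: ht; apply: pair_lt.
have hiA := tv_set A (emp_sum1 R (t i) N0) (proj2 (hP i)).
move: sj tvA hA hiA; rewrite /emp_set.
set a := \sum_(a in A) empirical R (t i) a.
set b := \sum_(a in A) empirical R (t j) a.
set c := mu_test R x A.
set d := \sum_(a in A) P i a.
move=> sj tvA hA hiA.
have t1 := ler_distD d a c.
have t2 := ler_distD c a b.
have t3 := tv_tri (P i) (empirical R (t i)) (P j).
have t4 := tv_tri (empirical R (t i)) (empirical R (t j)) (P j).
rewrite (tv_sym (P i) (empirical R (t i))) in t3.
have Vi := tv_letters (hl i).
have Vj := tv_letters (hl j).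
have := hD j ji.
rewrite (distrC c b) in t2.
set Vi' := tvdist (empirical R (t i)) (P i) in si t3 Vi hiA *.
set Vj' := tvdist (empirical R (t j)) (P j) in t4 Vj *.
set W := tvdist (empirical R (t i)) (empirical R (t j)) in tvA t4 *.
rewrite (distrC d c) in t1.
move=> hDij.
lra.
Qed.
End Score.


Section Prob.
Variables (R : realType) (X : finType).

Lemma prod_sum1 (m : nat) (Q : X -> R) : \sum_u Q u = 1 ->
  \sum_(y : {ffun 'I_m -> X}) \prod_(k < m) Q (y k) = 1.
Proof.
move=> hQ.
rewrite -(bigA_distr_bigA (fun (k : 'I_m) (u : X) => Q u)) /=.
by rewrite hQ prodr_const expr1n.
Qed.

Lemma hoeff2 (Q : X -> R) (f : pred X) (m : nat) (e : R) :
  (forall u : X, 0 <= Q u) -> \sum_u Q u = 1 -> (0 < m)%N -> 0 <= e ->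
  \sum_(y : {ffun 'I_m -> X}) (if e <= `|(\sum_(k < m) (f (y k))%:R) / m%:R - \sum_u Q u * (f u)%:R|
      then \prod_(k < m) Q (y k) else 0) <= 2 * expR (- (2 * m%:R * (e * e))).
Proof.
move=> Q0 hQ m0 e0.
have h1 := @hoeff_tail R X Q f m e Q0 hQ m0 e0.
have h2 := @hoeff_tail R X Q (predC f) m e Q0 hQ m0 e0.
rewrite mulr2n mulrDl mul1r.
apply: le_trans (lerD h1 h2).
rewrite -big_split /=; apply: ler_sum => y _.
have PQ : 0 <= \prod_(k < m) Q (y k) by apply: prodr_ge0.
have mR : 0 < m%:R :> R by rewrite ltr0n.
have ec : (\sum_(k < m) ((predC f) (y k))%:R) / m%:R - \sum_u Q u * ((predC f) u)%:R =
   - ((\sum_(k < m) (f (y k))%:R) / m%:R - \sum_u Q u * (f u)%:R).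
  have -> : \sum_(k < m) ((predC f) (y k))%:R = m%:R - \sum_(k < m) (f (y k))%:R :> R.
    have : \sum_(k < m) ((predC f) (y k))%:R + \sum_(k < m) (f (y k))%:R = m%:R :> R.
      rewrite -big_split /= (eq_bigr (fun _ => 1)); first by rewrite sumr_const card_ord.
      by move=> k _; case: (f (y k)); rewrite /= ?add0r ?addr0.
    move=> H; lra.
  have -> : \sum_u Q u * ((predC f) u)%:R = 1 - \sum_u Q u * (f u)%:R.
    have : \sum_u Q u * ((predC f) u)%:R + \sum_u Q u * (f u)%:R = 1.
      rewrite -big_split /=; transitivity (\sum_u Q u); last exact: hQ; apply: eq_bigr => u _.
      by case: (f u); rewrite /= ?mulr1 ?mulr0 ?add0r ?addr0.
    move=> H; lra.
  rewrite mulrBl divff ?gt_eqF //; ring.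
rewrite ec.
set z := _ - _.
case: ifP => H; last by case: ifP; case: ifP => //; rewrite ?addr0 ?add0r // => *; apply: addr_ge0.
case: (lerP 0 z) => hz.
  rewrite ger0_norm // in H; rewrite H; case: ifP => _; lra.
rewrite ltr0_norm // in H; rewrite H; case: ifP => _; lra.
Qed.

Lemma marg (M N : nat) (P : 'I_M -> X -> R) (k : 'I_M) (h : {ffun 'I_N -> X} -> R) :
  (forall i, \sum_u P i u = 1) ->
  \sum_(t : {ffun 'I_M -> {ffun 'I_N -> X}}) Ptrain P t * h (t k) =
  \sum_(y : {ffun 'I_N -> X}) (\prod_(m < N) P k (y m)) * h y.
Proof.
move=> hP.
pose G (i : 'I_M) (y : {ffun 'I_N -> X}) := (\prod_(m < N) P i (y m)) * (if i == k then h y else 1).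
transitivity (\sum_(t : {ffun 'I_M -> {ffun 'I_N -> X}}) \prod_(i < M) G i (t i)).
  apply: eq_bigr => t _; rewrite /G big_split /= /Ptrain; congr (_ * _).
  rewrite (bigD1 k) //= eqxx big1 ?mulr1 // => i /negbTE ->; done.
rewrite -(bigA_distr_bigA G) /= (bigD1 k) //= [X in _ * X]big1 ?mulr1.
  by apply: eq_bigr => y _; rewrite /G eqxx.
move=> i /negbTE ik; rewrite /G ik.
under eq_bigr => y _ do rewrite mulr1.
exact: prod_sum1.
Qed.
End Prob.


Section Main.
Variables (R : realType) (X : finType).

Lemma sum_ge_term (I : finType) (F : I -> R) j : (forall i, 0 <= F i) -> F j <= \sum_i F i.
Proof.
move=> F0; rewrite (bigD1 j) //= lerDl; apply: sumr_ge0 => i _; exact: F0.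
Qed.

Lemma ind_le (c c' : bool) (v : R) : (c -> c') -> 0 <= v -> v * c%:R <= if c' then v else 0.
Proof. by case: c; case: c' => //= h v0; rewrite ?mulr1 ?mulr0 //; have := h isT. Qed.

Lemma Ptrain_sum1 (M N : nat) (P : 'I_M -> X -> R) :
  (forall i, \sum_u P i u = 1) ->
  \sum_(t : {ffun 'I_M -> {ffun 'I_N -> X}}) Ptrain P t = 1.
Proof.
move=> hP; rewrite /Ptrain.
rewrite -(bigA_distr_bigA (fun (i : 'I_M) (y : {ffun 'I_N -> X}) => \prod_(m < N) P i (y m))) /=.
by rewrite big1 // => i _; apply: prod_sum1.
Qed.

Lemma pairs_count (M : nat) :
  \sum_(k < M) \sum_(l < M) ((k < l)%N)%:R = (M%:R * (M%:R - 1)) / 2 :> R.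
Proof.
set S := \sum_(k < M) \sum_(l < M) ((k < l)%N)%:R.
have h1 : \sum_(k < M) \sum_(l < M) ((l < k)%N)%:R = S :> R.
  by rewrite /S exchange_big.
have h2 : \sum_(k < M) \sum_(l < M) (((k < l)%N)%:R + ((l < k)%N)%:R + ((k == l))%:R) = M%:R * M%:R :> R.
  rewrite (eq_bigr (fun _ => M%:R)); first by rewrite sumr_const card_ord mulr_natl.
  move=> k _; rewrite (eq_bigr (fun _ => 1)); first by rewrite sumr_const card_ord.
  move=> l _; case: (ltngtP k l) => h; rewrite ?addr0 ?add0r //=.
  - have -> : (k == l) = false by apply/eqP => e; move: h; rewrite e ltnn.
    by rewrite addr0.
  - have -> : (k == l) = false by apply/eqP => e; move: h; rewrite e ltnn.
    by rewrite addr0.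
  - have -> : (k == l) = true by apply/eqP; apply: val_inj.
    by [].
have h3 : \sum_(k < M) \sum_(l < M) ((k == l))%:R = M%:R :> R.
  rewrite (eq_bigr (fun _ => 1)); first by rewrite sumr_const card_ord.
  move=> k _; rewrite (bigD1 k) //= eqxx big1 ?addr0 // => l /negbTE; by rewrite eq_sym => ->.
move: h2; rewrite (eq_bigr (fun k : 'I_M => \sum_(l < M) ((k < l)%N)%:R + \sum_(l < M) ((l < k)%N)%:R + \sum_(l < M) ((k == l))%:R)); last first.
  by move=> k _; rewrite -!big_split.
rewrite !big_split /= h1 h3 -/S => h2.
have -> : S = (M%:R * M%:R - M%:R) / 2 by lra.
by rewrite mulrBr mulr1.
Qed.


Lemma Dmin_ge0 (M : nat) (P : 'I_M -> X -> R) : 0 <= Dmin P.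
Proof.
rewrite /Dmin; apply: le_bigmin => [|i _] //; apply: le_bigmin => [|j _] //.
exact: tv_ge0.
Qed.

Lemma Dmin_le (M : nat) (P : 'I_M -> X -> R) i j : i != j -> Dmin P <= tvdist (P i) (P j).
Proof.
move=> ij; rewrite /Dmin; apply: (@bigmin_inf _ _ _ _ i) => //.
exact: bigmin_le_cond.
Qed.

Lemma cardX_gt0 (Q : X -> R) : \sum_u Q u = 1 -> (0 < #|X|)%N.
Proof.
move=> hQ; case: (pickP (@predT X)) => [a _|h]; first by apply/card_gt0P; exists a.
move: hQ; rewrite big_pred0 // => /eqP; by rewrite eq_sym oner_eq0.
Qed.

Lemma train_term (N : nat) (Q : X -> R) (a : X) (d1 : R) :
  is_distr Q -> (0 < N)%N -> 0 <= d1 ->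
  \sum_(y : {ffun 'I_N -> X}) (\prod_(m < N) Q (y m)) * ((d1 < `|empirical R y a - Q a|)%R)%:R
  <= 2 * expR (- (2 * N%:R * (d1 * d1))).
Proof.
move=> [Q0 hQ] N0 d10.
apply: le_trans (hoeff2 (pred1 a) Q0 hQ N0 d10).
apply: ler_sum => y _; apply: ind_le; last by apply: prodr_ge0.
have e1 : empirical R y a = (\sum_(k < N) ((pred1 a) (y k))%:R) / N%:R.
  by rewrite /empirical card_sumR.
have e2 : Q a = \sum_u Q u * ((pred1 a) u)%:R.
  rewrite (bigD1 a) //= eqxx mulr1 big1 ?addr0 // => u /negbTE ->; by rewrite mulr0.
rewrite -e1 -e2; exact: ltW.
Qed.

Lemma test_term (n : nat) (Q : X -> R) (A : {set X}) (d2 : R) :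
  is_distr Q -> (0 < n)%N -> 0 <= d2 ->
  \sum_(x : {ffun 'I_n -> X}) Ptest Q x * ((d2 <= `|mu_test R x A - \sum_(a in A) Q a|)%R)%:R
  <= 2 * expR (- (2 * n%:R * (d2 * d2))).
Proof.
move=> [Q0 hQ] n0 d20.
apply: le_trans (hoeff2 (fun u => u \in A) Q0 hQ n0 d20).
apply: ler_sum => y _; apply: ind_le; last by apply: prodr_ge0.
have e1 : mu_test R y A = (\sum_(k < n) ((fun u => u \in A) (y k))%:R) / n%:R.
  by rewrite /mu_test card_sumR.
have e2 : \sum_(a in A) Q a = \sum_u Q u * ((fun u => u \in A) u)%:R.
  rewrite big_mkcond /=; apply: eq_bigr => u _; by case: (u \in A); rewrite ?mulr1 ?mulr0.
by rewrite -e1 -e2.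
Qed.
End Main.


Section PE.
Variables (R : realType) (X : finType).

Lemma pe_bound (M N n : nat) (P : 'I_M -> X -> R)
  (g : {ffun 'I_M -> {ffun 'I_N -> X}} -> {ffun 'I_n -> X} -> 'I_M) (i : 'I_M) (d1 d2 : R) :
  (forall k, is_distr (P k)) -> (0 < N)%N -> (0 < n)%N -> DGL_rule R g -> 0 <= d1 -> 0 <= d2 ->
  #|X|%:R * d1 * 2 + 2 * d2 <= Dmin P ->
  \sum_(t : {ffun 'I_M -> {ffun 'I_N -> X}}) \sum_(x : {ffun 'I_n -> X})
     (if g t x != i then Ptrain P t * Ptest (P i) x else 0) <=
  M%:R * (#|X|%:R * (2 * expR (- (2 * N%:R * (d1 * d1))))) +
  (\sum_(k < M) \sum_(l < M) ((k < l)%N)%:R) * (2 * expR (- (2 * n%:R * (d2 * d2)))).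
Proof.
move=> hP N0 n0 hg d10 d20 hD.
pose S1 (t : {ffun 'I_M -> {ffun 'I_N -> X}}) : R :=
  \sum_(k < M) \sum_a ((d1 < `|empirical R (t k) a - P k a|)%R)%:R.
pose S2 (t : {ffun 'I_M -> {ffun 'I_N -> X}}) (x : {ffun 'I_n -> X}) : R :=
  \sum_(k < M) \sum_(l < M) (((k < l)%N) &&
     (d2 <= `|mu_test R x (scheffe R t k l) - \sum_(a in scheffe R t k l) P i a|)%R)%:R.
have S10 : forall t, 0 <= S1 t by move=> t; apply: sumr_ge0 => k _; apply: sumr_ge0.
have S20 : forall t x, 0 <= S2 t x by move=> t x; apply: sumr_ge0 => k _; apply: sumr_ge0.
apply: (@le_trans _ _ (\sum_(t : {ffun 'I_M -> {ffun 'I_N -> X}}) \sum_(x : {ffun 'I_n -> X})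
   (Ptrain P t * Ptest (P i) x) * (S1 t + S2 t x))).
  apply: ler_sum => t _; apply: ler_sum => x _.
  have p0 : 0 <= Ptrain P t * Ptest (P i) x.
    by apply: mulr_ge0; apply: prodr_ge0 => k _; [apply: prodr_ge0 => m _ |]; apply: (proj1 (hP _)).
  case: ifP => gi; last by apply: mulr_ge0 => //; apply: addr_ge0.
  suff h1 : 1 <= S1 t + S2 t x.
    by rewrite -[X in X <= _]mulr1; apply: ler_wpM2l.
  case: (boolP [forall k, forall a, `|empirical R (t k) a - P k a| <= d1]) => H1; last first.
    move/forallPn: H1 => [k /forallPn [a]]; rewrite -ltNge => h.
    have h1 : (1:R) <= \sum_a ((d1 < `|empirical R (t k) a - P k a|)%R)%:R.
      apply: (le_trans _ (@sum_ge_term R X (fun b => ((d1 < `|empirical R (t k) b - P k b|)%R)%:R) a _)); first by rewrite /= h.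
      by move=> b; case: (_ < _)%R.
    have h2 : \sum_a ((d1 < `|empirical R (t k) a - P k a|)%R)%:R <= S1 t.
      apply: (@sum_ge_term R _ (fun k => \sum_a ((d1 < `|empirical R (t k) a - P k a|)%R)%:R) k).
      by move=> k'; apply: sumr_ge0 => b _; case: (_ < _)%R.
    have := S20 t x; lra.
  case: (boolP [forall k : 'I_M, forall l : 'I_M, ((k < l)%N) ==>
      (`|mu_test R x (scheffe R t k l) - \sum_(a in scheffe R t k l) P i a| < d2)%R]) => H2.
    exfalso.
    have hl : forall k a, `|empirical R (t k) a - P k a| <= d1.
      by move=> k a; exact: (forallP (forallP H1 k) a).
    have ht : forall k l : 'I_M, (k < l)%N ->
       `|mu_test R x (scheffe R t k l) - \sum_(a in scheffe R t k l) P i a| < d2.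
      by move=> k l kl; exact: (implyP (forallP (forallP H2 k) l) kl).
    have hDj : forall j, j != i -> Dmin P <= tvdist (P i) (P j).
      by move=> j ji; apply: Dmin_le; rewrite eq_sym.
    have := good_correct hP N0 hg d10 d20 hDj hD hl ht.
    by move/eqP: gi.
  move/forallPn: H2 => [k /forallPn [l]]; rewrite negb_imply -leNgt => /andP[kl hl].
  have h1 : (1:R) <= \sum_(l < M) (((k < l)%N) &&
     (d2 <= `|mu_test R x (scheffe R t k l) - \sum_(a in scheffe R t k l) P i a|)%R)%:R.
    apply: (le_trans _ (@sum_ge_term R _ (fun l : 'I_M => (((k < l)%N) &&
     (d2 <= `|mu_test R x (scheffe R t k l) - \sum_(a in scheffe R t k l) P i a|)%R)%:R) l _)); first by rewrite /= kl hl.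
    by move=> b; case: (_ && _).
  have h2 : \sum_(l < M) (((k < l)%N) &&
     (d2 <= `|mu_test R x (scheffe R t k l) - \sum_(a in scheffe R t k l) P i a|)%R)%:R <= S2 t x.
    apply: (@sum_ge_term R _ (fun k : 'I_M => \sum_(l < M) (((k < l)%N) &&
     (d2 <= `|mu_test R x (scheffe R t k l) - \sum_(a in scheffe R t k l) P i a|)%R)%:R) k).
    by move=> k'; apply: sumr_ge0 => b _; case: (_ && _).
  have := S10 t; lra.
have hd : forall k, \sum_u P k u = 1 by move=> k; case: (hP k).
have E : \sum_(t : {ffun 'I_M -> {ffun 'I_N -> X}}) \sum_(x : {ffun 'I_n -> X})
   (Ptrain P t * Ptest (P i) x) * (S1 t + S2 t x) =
   \sum_(t : {ffun 'I_M -> {ffun 'I_N -> X}}) Ptrain P t * S1 t +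
   \sum_(t : {ffun 'I_M -> {ffun 'I_N -> X}}) Ptrain P t *
      \sum_(x : {ffun 'I_n -> X}) Ptest (P i) x * S2 t x.
  rewrite -big_split; apply: eq_bigr => t _ /=.
  transitivity (\sum_(x : {ffun 'I_n -> X}) (Ptrain P t * S1 t * Ptest (P i) x +
     Ptrain P t * (Ptest (P i) x * S2 t x))).
    by apply: eq_bigr => x _; ring.
  by rewrite big_split /= -mulr_sumr -mulr_sumr /Ptest prod_sum1 ?mulr1.
rewrite E; apply: lerD.
- rewrite /S1.
  under eq_bigr => t _ do rewrite mulr_sumr.
  rewrite exchange_big /=.
  under eq_bigr => k _ do (under eq_bigr => t _ do rewrite mulr_sumr; rewrite exchange_big /=).
  rewrite (_ : M%:R * _ = \sum_(k < M) (#|X|%:R * (2 * expR (- (2 * N%:R * (d1 * d1))))));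
    last by rewrite sumr_const card_ord mulr_natl.
  apply: ler_sum => k _.
  rewrite (_ : #|X|%:R * _ = \sum_(a : X) (2 * expR (- (2 * N%:R * (d1 * d1)))));
    last by rewrite sumr_const mulr_natl.
  apply: ler_sum => a _.
  rewrite (marg k (fun y => ((d1 < `|empirical R y a - P k a|)%R)%:R) hd).
  exact: train_term.
- set C := (\sum_(k < M) \sum_(l < M) ((k < l)%N)%:R) * (2 * expR (- (2 * n%:R * (d2 * d2)))).
  apply: (@le_trans _ _ (\sum_(t : {ffun 'I_M -> {ffun 'I_N -> X}}) Ptrain P t * C)); last first.
    by rewrite -mulr_suml Ptrain_sum1 ?mul1r.
  apply: ler_sum => t _; apply: ler_wpM2l.
    by apply: prodr_ge0 => k _; apply: prodr_ge0 => m _; apply: (proj1 (hP _)).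
  rewrite /S2 /C.
  under eq_bigr => x _ do rewrite mulr_sumr.
  rewrite exchange_big /= mulr_suml; apply: ler_sum => k _.
  under eq_bigr => x _ do rewrite mulr_sumr.
  rewrite exchange_big /= mulr_suml; apply: ler_sum => l _.
  case: (k < l)%N => /=.
    by rewrite mul1r; apply: test_term.
  rewrite mul0r big1 // => x _; by rewrite mulr0.
Qed.

End PE.

Unset Implicit Arguments. Set Strict Implicit.

Lemma pe_le1 (R : realType) (X : finType) (M N n : nat) (P : 'I_M -> X -> R)
  (g : {ffun 'I_M -> {ffun 'I_N -> X}} -> {ffun 'I_n -> X} -> 'I_M) (i : 'I_M) :
  (forall k, is_distr (P k)) ->
  \sum_(t : {ffun 'I_M -> {ffun 'I_N -> X}}) \sum_(x : {ffun 'I_n -> X})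
     (if g t x != i then Ptrain P t * Ptest (P i) x else 0) <= 1.
Proof.
move=> hP.
have hd : forall k, \sum_u P k u = 1 by move=> k; case: (hP k).
apply: (@le_trans _ _ (\sum_(t : {ffun 'I_M -> {ffun 'I_N -> X}}) \sum_(x : {ffun 'I_n -> X})
     Ptrain P t * Ptest (P i) x)).
  apply: ler_sum => t _; apply: ler_sum => x _.
  have p0 : 0 <= Ptrain P t * Ptest (P i) x.
    by apply: mulr_ge0; apply: prodr_ge0 => k _; [apply: prodr_ge0 => m _ |]; apply: (proj1 (hP _)).
  by case: ifP.
under eq_bigr => t _ do rewrite -mulr_sumr /Ptest prod_sum1 ?mulr1 //.
by rewrite Ptrain_sum1.
Qed.

Theorem corollary2 (R : realType) (X : finType) (M N n : nat)
  (P : 'I_M -> X -> R) (pi : 'I_M -> R)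
  (g : {ffun 'I_M -> {ffun 'I_N -> X}} -> {ffun 'I_n -> X} -> 'I_M) :
  (2 <= M)%N -> (1 <= n)%N -> (1 <= N)%N ->
  (forall i, is_distr (P i)) ->
  (forall i, 0 < pi i) -> \sum_(i < M) pi i = 1 ->
  @DGL_rule R X M N n g ->
  let alpha : R := N%:R / n%:R in
  let D : R := Dmin P in
  err_CL P pi g <=
    2 * M%:R * expR (- (n%:R * (2 * alpha * D ^+ 2
                  / (3 * #|X|%:R + 2 * Num.sqrt alpha) ^+ 2
              - Num.max (2 * ln (M%:R - 1) / n%:R) (ln #|X|%:R / n%:R)))).
Proof.
move=> M2 n1 N1 hP hpi hsum hg.
cbv zeta.
set alpha := N%:R / n%:R.
set D := Dmin P.
have hd : forall k, \sum_u P k u = 1 by move=> k; case: (hP k).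
have i0 : 'I_M := Ordinal M2.
have X0 : (0 < #|X|)%N by apply: (cardX_gt0 (hd i0)).
have XR : 1 <= #|X|%:R :> R by rewrite ler1n.
have nR : 0 < n%:R :> R by rewrite ltr0n.
have NR : 0 < N%:R :> R by rewrite ltr0n.
have MR : 2 <= M%:R :> R by rewrite ler_nat.
have a0 : 0 <= alpha by rewrite /alpha divr_ge0 // ltW.
set sa := Num.sqrt alpha.
have sa0 : 0 <= sa := sqrtr_ge0 _.
have sa2 : sa * sa = alpha by rewrite -expr2 sqr_sqrtr.
set den := 3 * #|X|%:R + 2 * sa.
have den0 : 0 < den by rewrite /den; lra.
have D0 : 0 <= D := Dmin_ge0 P.
set del := D / den.
have del0 : 0 <= del by rewrite /del divr_ge0 // ltW.
set Y := 2 * N%:R * (del * del).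
have Y0 : 0 <= Y by rewrite /Y; apply: mulr_ge0; [apply: mulr_ge0 => //; exact: ltW | exact: mulr_ge0].
set A := 2 * ln (M%:R - 1).
set B := ln #|X|%:R.
set K := expR (n%:R * Num.max (A / n%:R) (B / n%:R)).
have EY : n%:R * (2 * alpha * D ^+ 2 / den ^+ 2) = Y.
  rewrite /Y /del /alpha; field; by rewrite (gt_eqF nR) (gt_eqF den0).

have -> : n%:R * (2 * alpha * D ^+ 2 / den ^+ 2 - Num.max (A / n%:R) (B / n%:R)) =
  Y - n%:R * Num.max (A / n%:R) (B / n%:R) by rewrite mulrBr EY.
rewrite opprB addrC expRD -/K.
set E := expR (- Y).
have E0 : 0 < E := expR_gt0 _.
have Kge : forall z, z / n%:R <= Num.max (A / n%:R) (B / n%:R) -> expR z <= K.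
  move=> z hz; rewrite /K ler_expR.
  have -> : z = n%:R * (z / n%:R) by field; rewrite (gt_eqF nR).
  by apply: ler_wpM2l => //; exact: ltW.
have KX : #|X|%:R <= K.
  have := Kge B; rewrite /B lnK ?posrE ?ltr0n //; apply.
  by rewrite le_max lexx orbT.
have KM : (M%:R - 1) ^+ 2 <= K.
  have := Kge A; rewrite /A.
  have -> : 2 * ln (M%:R - 1) = ln (M%:R - 1) + ln (M%:R - 1) :> R by ring.
  rewrite expRD lnK ?posrE; last lra.
  rewrite expr2; apply. by rewrite le_max lexx.
have nal : n%:R * alpha = N%:R by rewrite /alpha; field; rewrite (gt_eqF nR).
set d1 := del * 3 / 2.
set d2 := sa * del.
have d10 : 0 <= d1 by rewrite /d1; lra.
have d20 : 0 <= d2 by rewrite /d2 mulr_ge0.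
have hD : #|X|%:R * d1 * 2 + 2 * d2 <= Dmin P.
  rewrite le_eqVlt; apply/orP; left; apply/eqP.
  rewrite /d1 /d2 /del -/D; move: den0; rewrite /den => den0; field.
  by rewrite gt_eqF.
have E2 : expR (- (2 * n%:R * (d2 * d2))) = E.
  congr expR; congr (- _); rewrite /Y /d2.
  transitivity (2 * (n%:R * (sa * sa)) * (del * del)); first ring.
  by rewrite sa2 nal.
have E1 : expR (- (2 * N%:R * (d1 * d1))) <= E * E.
  rewrite -expRD ler_expR /Y /d1.
  have : 0 <= N%:R * (del * del) by apply: mulr_ge0; [exact: ltW | exact: mulr_ge0].
  lra.
have pei : forall i : 'I_M, \sum_(t : {ffun 'I_M -> {ffun 'I_N -> X}}) \sum_(x : {ffun 'I_n -> X})
     (if g t x != i then Ptrain P t * Ptest (P i) x else 0) <= 2 * M%:R * (E * K).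
  move=> i.
  have pb := pe_bound i hP N1 n1 hg d10 d20 hD.
  rewrite pairs_count E2 in pb.
  have M0 : 0 <= M%:R :> R by lra.
  have X0' : 0 <= #|X|%:R :> R by lra.
  case: (lerP E (1/2)) => hE.
  - have E1' : 2 * expR (- (2 * N%:R * (d1 * d1))) <= E.
      have : E * E <= E * (1/2) by apply: ler_wpM2l => //; exact: ltW.
      lra.
    have h1 : M%:R * (#|X|%:R * (2 * expR (- (2 * N%:R * (d1 * d1))))) <= M%:R * (#|X|%:R * E).
      by apply: ler_wpM2l => //; apply: ler_wpM2l.
    have h2 : M%:R * (#|X|%:R * E) <= M%:R * (K * E).
      by apply: ler_wpM2l => //; apply: ler_wpM2r => //; exact: ltW.
    have KM1 : M%:R - 1 <= K.
      apply: le_trans KM; rewrite expr2.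
      have : 1 <= M%:R - 1 :> R by lra.
      move=> h; have := ler_wpM2l (ltW (lt_le_trans ltr01 h)) h; lra.
    have h3 : M%:R * ((M%:R - 1) * E) <= M%:R * (K * E).
      by apply: ler_wpM2l => //; apply: ler_wpM2r => //; exact: ltW.
    lra.
  - apply: (le_trans (@pe_le1 R X M N n P g i hP)).
    have K1 : 1 <= K by lra.
    have h1 : 1 <= M%:R * E by nra.
    have h2 : M%:R * E * 1 <= M%:R * E * K by apply: ler_wpM2l => //; lra.
    lra.
rewrite /err_CL.
apply: (@le_trans _ _ (\sum_(i < M) pi i * (2 * M%:R * (E * K)))); last first.
  by rewrite -mulr_suml hsum mul1r.
apply: ler_sum => i _; apply: ler_wpM2l; [exact: ltW | exact: pei].
Qed.
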